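(* Let $s,t,z$ be positive integers. For $\lambda\in\{0,\dots,z\}$ let $\theta=ts+\lambda$, $q=\min\{\lfloor\frac{z-1}{\lambda}\rfloor,t-1\}$, let $\mathbf P(C_A),\mathbf P(C_B),\mathbf P(S_A),\mathbf P(S_B)$ be the exponent sets described in the context, and let $N(\lambda)=\big|(\mathbf P(C_A)\cup\mathbf P(S_A))+(\mathbf P(C_B)\cup\mathbf P(S_B))\big|$ be the number of workers needed by AGE-CMPC with parameter $\lambda$. The number of workers required by AGE-CMPC is $N_{\text{AGE-CMPC}}=\min_{\lambda\in\{0,\dots,z\}}N(\lambda)$. Then $N_{\text{AGE-CMPC}}=2s+2z-1$ if $t=1$, and $N_{\text{AGE-CMPC}}=\min_{\lambda\in\{0,\dots,z\}}\Gamma(\lambda)$ if $t\ge2$, where $\Gamma(\lambda)=\Upsilon_1=2st^2+2z-1$ if $z>ts-s$, $\lambda=0$; $\Upsilon_2=st^2+3st-2s+t(z-1)+1$ if $z\le ts-s$, $\lambda=0$; $\Upsilon_3=2ts+(ts+z)(t-1)+2z-1$ if $\lambda=z$; $\Upsilon_4=(q+2)ts+\theta(t-1)+2z-1$ if $z>ts$, $0<\lambda<z$; $\Upsilon_5=3ts+\theta(t-1)+2z-1$ if $z\le ts$, $0<\lambda<z$, $ts<\lambda+s-1$; $\Upsilon_6=2ts+\theta(t-1)+(q+2)z-q-1$ if $\lambda+s-1<z\le ts$, $0<\lambda<z$, $q\lambda\ge s$; $\Upsilon_7=\theta(t+1)+q(z-1)-2\lambda+z+ts+\min\{0,z+s(1-t)-\lambda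 q-1\}$ if $\lambda+s-1<z\le ts$, $0<\lambda<z$, $q\lambda<s$; $\Upsilon_8=2ts+\theta(t-1)+3z+(\lambda+s-1)q-\lambda-s-1$ if $z\le\lambda+s-1\le ts$, $0<\lambda<z$, $q\lambda\ge s$; $\Upsilon_9=\theta(t+1)+q(s-1)-3\lambda+3z-1+\min\{0,ts-z+1+\lambda q-s\}$ if $z\le\lambda+s-1\le ts$, $0<\lambda<z$, $q\lambda<s$.
   Context: AGE-CMPC with parameter $\lambda$ uses $F_A=C_A+S_A$, $F_B=C_B+S_B$ with exponent sets: $\mathbf P(C_A)=\{j+si:0\le i\le t-1,0\le j\le s-1\}$, $\mathbf P(C_B)=\{(s-1-k)+\theta l:0\le k\le s-1,0\le l\le t-1\}$; $\mathbf P(S_A)=\{ts+\theta l+w:0\le l\le q-1,0\le w\le\lambda-1\}\cup\{ts+\theta q+u:0\le u\le z-1-q\lambda\}$ if $z>\lambda$ and $t\ne1$, and $\mathbf P(S_A)=\{ts+u:0\le u\le z-1\}$ if $z\le\lambda$ or $t=1$; $\mathbf P(S_B)=\{ts+\theta(t-1)+r:0\le r\le z-1\}$. Here $\mathbf X+\mathbf Y=\{a+b:a\in\mathbf X,b\in\mathbf Y\}$, and the required number of workers equals the number of monomials of $F_A(x)F_B(x)$. Convention: for $\lambda=0$ the quotient $\frac{z-1}{\lambda}$ is treated as $+\infty$, so $q=t-1$. *)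

(* Defs.v *)
From mathcomp Require Import all_boot all_order all_algebra.
Set Implicit Arguments. Unset Strict Implicit. Unset Printing Implicit Defensive.
Import Order.TTheory GRing.Theory Num.Theory.

(* Exponent sets are represented as duplicate-allowed lists of naturals;
   cardinalities are taken after [undup]. *)

Definition sumset (X Y : seq nat) : seq nat := [seq a + b | a <- X, b <- Y].

Definition theta (s t l : nat) : nat := t * s + l.

(* q = min(floor((z-1)/lambda), t-1), with (z-1)/0 = +infinity, so q = t-1 at lambda = 0 *)
Definition qpar (t z l : nat) : nat :=
  if l == 0 then t.-1 else minn ((z.-1) %/ l) t.-1.

Definition P_CA (s t : nat) : seq nat :=
  [seq j + s * i | i <- iota 0 t, j <- iota 0 s].

Definition P_CB (s t l : nat) : seq nat :=
  [seq (s - 1 - k) + theta s t l * m | k <- iota 0 s, m <- iota 0 t].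

Definition P_SA (s t z l : nat) : seq nat :=
  let q := qpar t z l in
  if (l < z) && (t != 1) then
    [seq t * s + theta s t l * m + w | m <- iota 0 q, w <- iota 0 l]
    ++ [seq t * s + theta s t l * q + u | u <- iota 0 (z - q * l)]
  else [seq t * s + u | u <- iota 0 z].

Definition P_SB (s t z l : nat) : seq nat :=
  [seq t * s + theta s t l * (t - 1) + r | r <- iota 0 z].

Definition Nworkers (s t z l : nat) : nat :=
  size (undup (sumset (P_CA s t ++ P_SA s t z l) (P_CB s t l ++ P_SB s t z l))).

Definition N_AGE (s t z : nat) : nat :=
  \big[minn/Nworkers s t z 0]_(l < z.+1) Nworkers s t z l.

Local Open Scope ring_scope.

Definition Gamma (s t z l : nat) : int :=
  let S := s%:Z in let T := t%:Z in let Z := z%:Z in let L := l%:Z in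
  let Th := (theta s t l)%:Z in let Q := (qpar t z l)%:Z in
  if l == 0%N then
    if (t * s - s < z)%N then 2 * S * T ^+ 2 + 2 * Z - 1
    else S * T ^+ 2 + 3 * S * T - 2 * S + T * (Z - 1) + 1
  else if l == z then
    2 * T * S + (T * S + Z) * (T - 1) + 2 * Z - 1
  else
    if (t * s < z)%N then (Q + 2) * T * S + Th * (T - 1) + 2 * Z - 1
    else if (t * s < l + s - 1)%N then 3 * T * S + Th * (T - 1) + 2 * Z - 1
    else if (l + s - 1 < z)%N then
      if (s <= qpar t z l * l)%N then
        2 * T * S + Th * (T - 1) + (Q + 2) * Z - Q - 1
      else
        Th * (T + 1) + Q * (Z - 1) - 2 * L + Z + T * S
          + Num.min 0 (Z + S * (1 - T) - L * Q - 1)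
    else
      if (s <= qpar t z l * l)%N then
        2 * T * S + Th * (T - 1) + 3 * Z + (L + S - 1) * Q - L - S - 1
      else
        Th * (T + 1) + Q * (S - 1) - 3 * L + 3 * Z - 1
          + Num.min 0 (T * S - Z + 1 + L * Q - S).

(* Main.v *)
Require Import Defs.
From mathcomp Require Import all_boot all_order all_algebra.
From mathcomp Require Import zify.
Import Order.TTheory GRing.Theory Num.Theory.

Lemma mem_sumset (X Y : seq nat) n :
  n \in sumset X Y <-> exists a b, [/\ a \in X, b \in Y & n = a + b].
Proof.
rewrite /sumset; split.
  by move/allpairsPdep => [a [b [ha hb ->]]]; exists a, b.
by move=> [a [b [ha hb ->]]]; apply/allpairsPdep; exists a, b.
Qed.

Lemma mem_CA s t a : 0 < s -> (a \in P_CA s t) = (a < t * s).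
Proof.
move=> s0; apply/idP/idP.
  move/allpairsPdep => [i [j [hi hj ->]]]; move: hi hj; rewrite !mem_iota /=.
  move=> hi hj; nia.
move=> ha; apply/allpairsPdep; exists (a %/ s), (a %% s); rewrite !mem_iota /=.
split; [|by rewrite ltn_mod s0|by rewrite mulnC addnC -divn_eq].
by rewrite ltn_divLR.
Qed.

Lemma mem_CB s t l b : (b \in P_CB s t l) <-> exists m r, [/\ m < t, r < s & b = theta s t l * m + r].
Proof.
split.
  move/allpairsPdep => [k [m [hk hm ->]]]; move: hk hm; rewrite !mem_iota /= => hk hm.
  exists m, (s - 1 - k); split => //; lia.
move=> [m [r [hm hr ->]]]; apply/allpairsPdep; exists (s - 1 - r), m; rewrite !mem_iota /=.
split; lia.
Qed.

Lemma mem_SB s t z l b : (b \in P_SB s t z l) <-> exists r, r < z /\ b = t * s + theta s t l * (t - 1) + r.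
Proof.
split.
  by move/mapP => [r]; rewrite mem_iota => hr ->; exists r; split => //; lia.
by move=> [r [hr ->]]; apply/mapP; exists r => //; rewrite mem_iota; lia.
Qed.

Lemma qpar_z t z : 0 < z -> qpar t z z = 0.
Proof. by move=> z0; rewrite /qpar; case: ifP => [/eqP|_]; [lia| rewrite divn_small ?min0n //; lia]. Qed.

Lemma mem_SA s t z l a : 1 < t -> l <= z -> 0 < z ->
  (a \in P_SA s t z l) <->
  ((exists m w, [/\ m < qpar t z l, w < l & a = t * s + theta s t l * m + w]) \/
   (exists u, u < z - qpar t z l * l /\ a = t * s + theta s t l * qpar t z l + u)).
Proof.
move=> t1 lz z0; rewrite /P_SA.
have tn1 : (t != 1) by lia.
rewrite tn1 andbT; case: ltnP => hl.
  rewrite mem_cat; split.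
    case/orP.
      by move/allpairsPdep => [m [w]]; rewrite !mem_iota /= => -[hm hw ->]; left; exists m, w; split => //; lia.
    by move/mapP => [u]; rewrite mem_iota => hu ->; right; exists u; split => //; lia.
  case=> [[m [w [hm hw ->]]]|[u [hu ->]]]; apply/orP.
    by left; apply/allpairsPdep; exists m, w; rewrite !mem_iota; split => //; lia.
  by right; apply/mapP; exists u; rewrite ?mem_iota //; lia.
have -> : l = z by lia.
rewrite qpar_z // mul0n muln0 subn0 addn0; split.
  by move/mapP => [u]; rewrite mem_iota => hu ->; right; exists u; split => //; lia.
case=> [[m [w [hm]]]|[u [hu ->]]] //.
by apply/mapP; exists u; rewrite ?mem_iota //; lia.
Qed.

Lemma qpar_facts t z l : 1 < t -> 0 < z -> l <= z ->
  let q := qpar t z l in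
  [/\ q <= t - 1, q * l <= z - 1, (q < t - 1 -> 0 < l /\ z <= q * l + l),
      (l = 0 -> q = t - 1) & (q = 0 -> l = z)].
Proof.
move=> t1 z0 lz q; rewrite /q /qpar.
case: eqP => [->|/eqP l0]; first by split; lia.
have hd := leq_trunc_div (z.-1) l.
have hd2 : z.-1 < (z.-1 %/ l).+1 * l by apply: ltn_ceil; rewrite lt0n.
have {l0} l0 : 0 < l by rewrite lt0n.
have hm1 := geq_minl ((z.-1) %/ l) (t.-1).
have hm2 := geq_minr ((z.-1) %/ l) (t.-1).
split.
- lia.
- by apply: leq_trans (leq_mul hm1 (leqnn l)) _; lia.
- move=> hq; split; first lia.
  have : minn (z.-1 %/ l) t.-1 = z.-1 %/ l.
    by apply/minn_idPl; move: hq; rewrite /minn; case: ifP; lia.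
  move=> e; rewrite e; lia.
- lia.
- move=> h0; move: h0; rewrite /minn; case: ifP; last lia.
  move=> _ h0; rewrite h0 in hd2; lia.
Qed.

Definition Rb s t l := theta s t l * (t - 1) + 2 * (t * s).
Definition Lm s t z l := l + maxn (z - 1) (s - 1 + maxn l (z - qpar t z l * l)).
Definition Ll s t z l := l + maxn (z - 1) (z - qpar t z l * l + s - 1).
Definition Ee t z l := 2 * z - qpar t z l * l - 1.
Definition Lf s t z l i :=
  if i.+1 < qpar t z l then Lm s t z l else if i.+1 == qpar t z l then Ll s t z l else Ee t z l.

Definition Aset s t z l := P_CA s t ++ P_SA s t z l.
Definition Bset s t z l := P_CB s t l ++ P_SB s t z l.

Lemma memA_small s t z l a : 0 < s -> 1 < t -> 0 < z -> l <= z ->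
  a < theta s t l -> a \in Aset s t z l.
Proof.
move=> s0 t1 z0 lz ha; rewrite mem_cat mem_CA //.
case: (ltnP a (t * s)) => [//|h] /=.
have [_ hql _ _ hq0] := @qpar_facts t z l t1 z0 lz.
apply/(@mem_SA s t z l a t1 lz z0).
move: ha; rewrite /theta => ha.
case: (posnP (qpar t z l)) => hq.
  right; exists (a - t * s); rewrite hq mul0n muln0; split; lia.
left; exists 0, (a - t * s); split; lia.
Qed.

Lemma Lf_facts s t z l : 0 < s -> 1 < t -> 0 < z -> l <= z ->
  let q := qpar t z l in
  [/\ forall i, i < q -> l + z - 1 <= Lf s t z l i /\ l + (z - q * l + s - 1) <= Lf s t z l i,
      forall i, i.+1 < q -> Lf s t z l i = Lm s t z l,
      forall i, i.+1 = q -> Lf s t z l i = Ll s t z l,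
      Lf s t z l q = Ee t z l &
      z - 1 <= Lf s t z l 0].
Proof.
move=> s0 t1 z0 lz q.
have [hqt hql hqlt hl0 hq0] := @qpar_facts t z l t1 z0 lz.
rewrite /Lf /Lm /Ll /Ee -/q; split.
- move=> i hi; case: ifP => h1; first lia.
  case: ifP => h2; first lia. lia.
- by move=> i ->.
- by move=> i <-; rewrite ltnn eqxx.
- by rewrite ltnNge leqnSn /= eqn_leq ltnn.
- case: ifP => h1; first lia. case: ifP => h2; lia.
Qed.

Lemma char_sub s t z l n : 0 < s -> 1 < t -> 0 < z -> l <= z ->
  n \in sumset (Aset s t z l) (Bset s t z l) ->
  n < Rb s t l \/ exists i y, [/\ i <= qpar t z l, y < Lf s t z l i & n = Rb s t l + theta s t l * i + y].
Proof.
move=> s0 t1 z0 lz /mem_sumset [a [b [ha hb ->]]].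
have [hqt hql hqlt hl0 hq0] := @qpar_facts t z l t1 z0 lz.
have [Lfi Lfm Lfl Lfq Lf0] := @Lf_facts s t z l s0 t1 z0 lz.
rewrite /Rb.
set q := qpar t z l in hqt hql hqlt hl0 hq0 Lfi Lfm Lfl Lfq Lf0 ha hb *.
have hth : theta s t l = t * s + l by [].
set th := theta s t l in hth ha hb *.
have [T tT] : exists T, t = T.+1 by exists t.-1; lia.
have -> : t - 1 = T by lia.
have sts : s <= t * s by rewrite leq_pmull //; lia.
move: hb; rewrite mem_cat => /orP [/mem_CB [m' [r [hm' hr ->]]] | /mem_SB [r [hr ->]]].
- move: ha; rewrite mem_cat mem_CA // => /orP [ha | /(@mem_SA s t z l a t1 lz z0) [[m [w [hm hw ->]]] | [u [hu ->]]]].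
  + left. have : th * m' <= th * T by rewrite leq_mul2l; lia. lia.
  +
    case: (ltnP (m + m') t) => hk.
    * case: (ltnP (m + m') T) => hk2.
      - left. have : th * (m + m').+1 <= th * T by rewrite leq_mul2l; lia.
        rewrite mulnS mulnDr; lia.
      - have ek : m + m' = T by lia.
        case: (ltnP (t * s + th * m + w + (th * m' + r)) (th * T + 2 * (t * s))) => hn; first by left.
        right; exists 0, (t * s + th * m + w + (th * m' + r) - (th * T + 2 * (t * s))).
        have e2 : th * m + th * m' = th * T by rewrite -mulnDr ek.
        have [h1 h2] := Lfi 0 (leq_ltn_trans (leq0n m) hm).
        split; [lia | lia | lia].
    * right; exists (m + m' - t), (l + w + r).
      have e2 : th * m + th * m' = th * (m + m' - t) + th * T + th.
        set k := m + m' - t. have ek : m + m' = k + T + 1 by lia.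
        by rewrite -mulnDr ek !mulnDr muln1.
      have hi : (m + m' - t).+1 < q by lia.
      rewrite (Lfm _ hi) /Lm -/q; split; lia.
  +
    case: (ltnP (q + m') t) => hk.
    * case: (ltnP (q + m') T) => hk2.
      - left. have : th * (q + m').+1 <= th * T by rewrite leq_mul2l; lia.
        have [l0 hz] := hqlt ltac:(lia).
        rewrite mulnS mulnDr; lia.
      - have ek : q + m' = T by lia.
        case: (ltnP (t * s + th * q + u + (th * m' + r)) (th * T + 2 * (t * s))) => hn; first by left.
        right; exists 0, (t * s + th * q + u + (th * m' + r) - (th * T + 2 * (t * s))).
        have e2 : th * q + th * m' = th * T by rewrite -mulnDr ek.
        case: (posnP q) => hq0'.
        - move: Lfq; rewrite hq0' => Lfq. rewrite Lfq /Ee -/q hq0'. split; lia.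
        have [h1 h2] := Lfi 0 hq0'.
        split; [lia | lia | lia].
    * right; exists (q + m' - t), (l + u + r).
      have e2 : th * q + th * m' = th * (q + m' - t) + th * T + th.
        set k := q + m' - t. have ek : q + m' = k + T + 1 by lia.
        by rewrite -mulnDr ek !mulnDr muln1.
      have hi : (q + m' - t) < q by lia.
      have [h1 h2] := Lfi _ hi.
      split; lia.
- have eT : t - 1 = T by lia. rewrite eT.
  move: ha; rewrite mem_cat mem_CA // => /orP [ha | /(@mem_SA s t z l a t1 lz z0) [[m [w [hm hw ->]]] | [u [hu ->]]]].
  + case: (ltnP (a + (t * s + th * T + r)) (th * T + 2 * (t * s))) => hn; first by left.
    right; exists 0, (a + (t * s + th * T + r) - (th * T + 2 * (t * s))).
    split; lia.
  + right; exists m, (w + r).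
    have [h1 h2] := Lfi _ hm.
    split; lia.
  + right; exists q, (u + r).
    rewrite Lfq /Ee -/q; split; lia.
Qed.

Lemma char_sup s t z l n : 0 < s -> 1 < t -> 0 < z -> l <= z ->
  (n < Rb s t l \/ exists i y, [/\ i <= qpar t z l, y < Lf s t z l i & n = Rb s t l + theta s t l * i + y]) ->
  n \in sumset (Aset s t z l) (Bset s t z l).
Proof.
move=> s0 t1 z0 lz H; apply/mem_sumset.
have [hqt hql hqlt hl0 hq0] := @qpar_facts t z l t1 z0 lz.
have [Lfi Lfm Lfl Lfq Lf0] := @Lf_facts s t z l s0 t1 z0 lz.
have mA := @memA_small s t z l.
clear hqlt hl0 hq0.
move: H; rewrite /Rb.
set q := qpar t z l in hqt hql Lfi Lfm Lfl Lfq Lf0 *.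
have hth : theta s t l = t * s + l by [].
have [T tT] : exists T, t = T.+1 by exists t.-1; lia.
have eT : t - 1 = T by lia.
have sts : s <= t * s by rewrite leq_pmull //; lia.
have SA1 : forall m w, m < q -> w < l -> t * s + theta s t l * m + w \in Aset s t z l.
  move=> m w hm hw; rewrite mem_cat; apply/orP; right.
  by apply/(@mem_SA s t z l _ t1 lz z0); left; exists m, w.
have SA2 : forall u, u < z - q * l -> t * s + theta s t l * q + u \in Aset s t z l.
  move=> u hu; rewrite mem_cat; apply/orP; right.
  by apply/(@mem_SA s t z l _ t1 lz z0); right; exists u.
have CB : forall m r, m < t -> r < s -> theta s t l * m + r \in Bset s t z l.
  move=> m r hm hr; rewrite mem_cat; apply/orP; left.
  by apply/mem_CB; exists m, r.
have SB : forall r, r < z -> t * s + theta s t l * T + r \in Bset s t z l.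
  move=> r hr; rewrite mem_cat; apply/orP; right.
  by apply/mem_SB; exists r; rewrite eT.
rewrite eT.
set th := theta s t l in hth mA SA1 SA2 CB SB *.
case => [hn | [i [y [hi hy ->]]]].
- case: (ltnP n (th * T + t * s)) => h1.
  + exists (n %% th), (th * (n %/ th) + 0); split.
    * apply: mA => //; rewrite ltn_mod; lia.
    * apply: CB => //; rewrite ltn_divLR; last lia.
      have : th * T + th = th * t by rewrite tT mulnS addnC.
      rewrite mulnC; lia.
    * by rewrite addn0 mulnC addnC -divn_eq.
  + exists (n - (th * T + t * s)), (t * s + th * T + 0); split.
    * apply: mA => //; lia.
    * by apply: SB.
    * lia.
- case: (ltnP i q) => hiq; last first.
  + have eiq : i = q by lia.
    rewrite eiq Lfq /Ee -/q in hy *.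
    exists (t * s + th * q + minn y (z - q * l - 1)), (t * s + th * T + (y - minn y (z - q * l - 1))).
    split; [apply: SA2 | apply: SB | ]; lia.
  + have [zr [ezr ezq zr1]] : exists zr, [/\ z = q * l + zr, z - q * l = zr & 0 < zr].
      by exists (z - q * l); split; lia.
    case: (ltnP y l) => hyl.
      exists (t * s + th * i + y), (t * s + th * T + 0); split; [apply: SA1 | apply: SB | ]; lia.
    have [y' ey] : exists y', y = l + y' by exists (y - l); lia.
    subst y.
    have [k ek] : exists k, t + i = q + k by exists (t + i - q); lia.
    have em : th * q + th * k = th * i + th * T + th.
      clear -ek tT; rewrite -mulnDr -ek tT addSn mulnS mulnDr; lia.
    case: (ltnP y' (zr + s - 1)) => hy1.
      exists (t * s + th * q + minn y' (zr - 1)), (th * k + (y' - minn y' (zr - 1))).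
      split; [apply: SA2; rewrite ezq; lia | apply: CB; lia | clear -em hth; lia].
    case: (ltnP (l + y') (l + z - 1)) => hy2.
      have l1 : 0 < l.
        case: (posnP l) => // l0; exfalso; move: hy1 hy2 ezr; rewrite l0 muln0; clear; lia.
      exists (t * s + th * i + (l - 1)), (t * s + th * T + (y' + 1)).
      split; [apply: SA1 | apply: SB | ]; lia.
    have hi1 : i.+1 < q.
      case: (ltnP i.+1 q) => // hh.
      have eq1 : i.+1 = q by lia.
      move: hy; rewrite (Lfl _ eq1) /Ll -/q ezq; lia.
    move: hy; rewrite (Lfm _ hi1) /Lm -/q ezq => hy.
    have [q' eq'] : exists q', q = q'.+1 by exists q.-1; lia.
    have [k' ek'] : exists k', t + i = q' + k' by exists (t + i - q'); lia.
    have em2 : th * q' + th * k' = th * i + th * T + th.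
      clear -ek' tT; rewrite -mulnDr -ek' tT addSn mulnS mulnDr; lia.
    exists (t * s + th * q' + minn y' (l - 1)), (th * k' + (y' - minn y' (l - 1))).
    split; [apply: SA1; lia | apply: CB; lia | clear -em2 hth; lia].
Qed.

Lemma count_lt_iota c n : count (fun y => y < c) (iota 0 n) = minn c n.
Proof.
elim: n => [|n IH]; first by rewrite minn0.
rewrite -addn1 iotaD count_cat IH /= add0n addn0; lia.
Qed.

Lemma count_iota_shift (p : pred nat) a n c :
  (forall y, y < n -> p (a + y) = (y < c)) -> count p (iota a n) = minn c n.
Proof.
move=> H; rewrite -(addn0 a) iotaDl count_map -count_lt_iota.
apply: eq_in_count => y; rewrite mem_iota add0n => /andP [_ hy] /=.
exact: H.
Qed.

Lemma Lf_step s t z l i : 0 < s -> 1 < t -> 0 < z -> l <= z -> i < qpar t z l ->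
  Lf s t z l i <= theta s t l + Lf s t z l i.+1.
Proof.
move=> s0 t1 z0 lz hi.
have [hqt hql hqlt hl0 hq0] := @qpar_facts t z l t1 z0 lz.
rewrite /Lf /Lm /Ll /Ee /theta.
set q := qpar t z l in hqt hql hqlt hl0 hq0 hi *.
have sts : s <= t * s by rewrite leq_pmull //; lia.
case: (ltngtP i.+2 q) => h; first lia.
- have -> : i.+1 == q by lia. lia.
- move: h hi => <- _; rewrite ?ltnn ?eqxx; lia.
Qed.

Lemma Lf_chain s t z l j k : 0 < s -> 1 < t -> 0 < z -> l <= z -> j + k <= qpar t z l ->
  Lf s t z l j <= theta s t l * k + Lf s t z l (j + k).
Proof.
move=> s0 t1 z0 lz; elim: k => [|k IH] hjk; first by rewrite muln0 addn0.
have := @Lf_step s t z l (j + k) s0 t1 z0 lz.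
move=> /(_ ltac:(lia)); rewrite -addnS => h.
have := IH ltac:(lia); rewrite mulnS; lia.
Qed.

Definition X s t z l := sumset (Aset s t z l) (Bset s t z l).

Lemma block_mem s t z l i y : 0 < s -> 1 < t -> 0 < z -> l <= z -> i < qpar t z l -> y < theta s t l ->
  (Rb s t l + theta s t l * i + y \in X s t z l) = (y < Lf s t z l i).
Proof.
move=> s0 t1 z0 lz hi hy; apply/idP/idP.
- move/(@char_sub s t z l _ s0 t1 z0 lz) => [|[j [y' [hj hy' e]]]]; first lia.
  case: (ltngtP j i) => hji.
  + have := @Lf_chain s t z l j (i - j) s0 t1 z0 lz ltac:(lia).
    have -> : j + (i - j) = i by lia.
    have : theta s t l * i = theta s t l * j + theta s t l * (i - j).
      by rewrite -mulnDr; congr (_ * _); lia.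
    lia.
  + have : theta s t l * i.+1 <= theta s t l * j by rewrite leq_mul2l; lia.
    rewrite mulnS; lia.
  + subst j; lia.
- move=> h; apply: (@char_sup s t z l _ s0 t1 z0 lz); right; exists i, y; split => //; lia.
Qed.

Lemma mid_count s t z l k : 0 < s -> 1 < t -> 0 < z -> l <= z -> k <= qpar t z l ->
  count (mem (X s t z l)) (iota (Rb s t l) (theta s t l * k)) =
  \sum_(i < k) minn (Lf s t z l i) (theta s t l).
Proof.
move=> s0 t1 z0 lz; elim: k => [|k IH] hk; first by rewrite muln0 big_ord0.
rewrite big_ord_recr /= -IH; last lia.
rewrite mulnS addnC iotaD count_cat; congr (_ + _).
apply: count_iota_shift => y hy /=.
exact: (@block_mem s t z l k y s0 t1 z0 lz).
Qed.

Lemma Nworkers_formula s t z l : 0 < s -> 1 < t -> 0 < z -> l <= z ->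
  Nworkers s t z l = Rb s t l + \sum_(i < qpar t z l) minn (Lf s t z l i) (theta s t l) + Ee t z l.
Proof.
move=> s0 t1 z0 lz.
have [Lfi Lfm Lfl Lfq Lf0] := @Lf_facts s t z l s0 t1 z0 lz.
rewrite /Nworkers -/(Aset s t z l) -/(Bset s t z l) -/(X s t z l).
set M := Rb s t l + theta s t l * qpar t z l + Ee t z l.
have hp : perm_eq (undup (X s t z l)) (filter (mem (X s t z l)) (iota 0 M)).
  apply: uniq_perm; [exact: undup_uniq | exact: filter_uniq (iota_uniq _ _) | ].
  move=> n; rewrite mem_undup mem_filter mem_iota add0n /=.
  case hn: (n \in X s t z l) => //=; symmetry.
  move: hn => /(@char_sub s t z l _ s0 t1 z0 lz) [|[j [y' [hj hy' e]]]]; first lia.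
  have := @Lf_chain s t z l j (qpar t z l - j) s0 t1 z0 lz ltac:(lia).
  have -> : j + (qpar t z l - j) = qpar t z l by lia.
  have : theta s t l * qpar t z l = theta s t l * j + theta s t l * (qpar t z l - j).
    by rewrite -mulnDr; congr (_ * _); lia.
  rewrite Lfq /M; lia.
rewrite (perm_size hp) size_filter /M iotaD iotaD !count_cat add0n.
rewrite (@mid_count s t z l _ s0 t1 z0 lz (leqnn _)).
congr (_ + _ + _).
- rewrite (@count_iota_shift _ 0 _ (Rb s t l)) ?minnn // => y hy /=.
  by rewrite add0n hy; apply: (@char_sup s t z l _ s0 t1 z0 lz); left.
- rewrite (@count_iota_shift _ _ _ (Ee t z l)) ?minnn // => y hy /=.
  rewrite hy; apply: (@char_sup s t z l _ s0 t1 z0 lz); right; exists (qpar t z l), y; split => //.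
  by rewrite Lfq.
Qed.

Definition Fnat s t z l :=
  Rb s t l + (if qpar t z l == 0 then 0 else
     (qpar t z l - 1) * minn (Lm s t z l) (theta s t l) + minn (Ll s t z l) (theta s t l))
  + Ee t z l.

Lemma Nworkers_F s t z l : 0 < s -> 1 < t -> 0 < z -> l <= z ->
  Nworkers s t z l = Fnat s t z l.
Proof.
move=> s0 t1 z0 lz; rewrite (@Nworkers_formula s t z l s0 t1 z0 lz) /Fnat.
congr (_ + _ + _).
have [Lfi Lfm Lfl Lfq Lf0] := @Lf_facts s t z l s0 t1 z0 lz.
case: (posnP (qpar t z l)) => hq.
  by rewrite hq big_ord0.
have [q' eq'] : exists q', qpar t z l = q'.+1 by exists (qpar t z l).-1; lia.
rewrite eq' big_ord_recr /= (Lfl q') //.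
rewrite (eq_bigr (fun _ => minn (Lm s t z l) (theta s t l))); last first.
  by move=> i _; rewrite Lfm // eq' ltnS.
by rewrite sum_nat_const card_ord subn1.
Qed.

Lemma Nworkers_t1 s z l : 0 < s -> 0 < z -> Nworkers s 1 z l = 2 * s + 2 * z - 1.
Proof.
move=> s0 z0.
have memA : forall a, (a \in P_CA s 1 ++ P_SA s 1 z l) = (a < s + z).
  move=> a; rewrite mem_cat mem_CA // mul1n /P_SA /= andbF.
  apply/idP/idP.
    case/orP => [|/mapP [u]]; first lia.
    by rewrite mem_iota => hu ->; lia.
  move=> h; case: (ltnP a s) => [//|hs]; apply/orP; right.
  by apply/mapP; exists (a - s); rewrite ?mem_iota; lia.
have memB : forall b, (b \in P_CB s 1 l ++ P_SB s 1 z l) = (b < s + z).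
  move=> b; rewrite mem_cat; apply/idP/idP.
    case/orP => [/mem_CB [m [r [hm hr ->]]]|/mem_SB [r [hr ->]]].
      have -> : m = 0 by lia. by rewrite muln0; lia.
    by rewrite subnn muln0; lia.
  move=> h; apply/orP; case: (ltnP b s) => hs.
    by left; apply/mem_CB; exists 0, b; rewrite muln0; split.
  by right; apply/mem_SB; exists (b - s); rewrite subnn muln0; lia.
rewrite /Nworkers.
set Xs := sumset _ _.
have hp : perm_eq (undup Xs) (iota 0 (2 * s + 2 * z - 1)).
  apply: uniq_perm; [exact: undup_uniq | exact: iota_uniq | ].
  move=> n; rewrite mem_undup mem_iota add0n; apply/idP/idP.
    by move/mem_sumset => [a [b [ha hb ->]]]; move: ha hb; rewrite memA memB; lia.
  move=> hn; apply/mem_sumset.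
  exists (minn n (s + z - 1)), (n - minn n (s + z - 1)); rewrite memA memB; split; lia.
by rewrite (perm_size hp) size_iota.
Qed.

Local Open Scope ring_scope.

Lemma qpar0 t z : qpar t z 0 = (t - 1)%N.
Proof. by rewrite /qpar eqxx; lia. Qed.

Lemma Fz_Gz s t z : (0 < s)%N -> (1 < t)%N -> (0 < z)%N ->
  (Fnat s t z z)%:Z = Gamma s t z z.
Proof.
move=> s0 t1 z0.
rewrite /Fnat /Gamma /Ee /Rb /theta qpar_z // eqxx.
have -> : (z == 0)%N = false by lia.
rewrite /= eqxx; lia.
Qed.

Lemma F0_G0 s t z : (0 < s)%N -> (1 < t)%N -> (0 < z)%N ->
  (Fnat s t z 0)%:Z >= Num.min (Gamma s t z 0) (Gamma s t z z) /\
  Gamma s t z 0 >= Num.min (Fnat s t z 0)%:Z (Fnat s t z z)%:Z.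
Proof.
move=> s0 t1 z0.
rewrite -Fz_Gz //.
rewrite /Fnat /Gamma /Ee /Rb /Lm /Ll /theta qpar0 qpar_z // eqxx /=.
rewrite !muln0 !addn0 !subn0 !add0n.
have -> : maxn 0 z = z by lia.
have -> : (t - 1 == 0)%N = false by lia.
have -> : maxn (z - 1) (s - 1 + z) = (z + s - 1)%N by lia.
have -> : maxn (z - 1) (z + s - 1) = (z + s - 1)%N by lia.
have [T tT] : exists T, t = T.+1 by exists t.-1; lia.
subst t.
have -> : (T.+1 - 1 = T)%N by lia.
case: ifP => h.
- have -> : minn (z + s - 1) (T.+1 * s) = (T.+1 * s)%N by lia.
  nia.
- have -> : minn (z + s - 1) (T.+1 * s) = (z + s - 1)%N by lia.
  nia.
Qed.

Definition FF (s t z l q m1 m2 : int) := (t * s+l) * (t-1) + 2 * (t * s) + (q-1) * m1 + m2 + 2 * z - q * l - 1.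
Definition FZ (s t z : int) := (t * s+z) * (t-1) + 2 * (t * s) + 2 * z - 1.

Lemma case4 (s t z l q : int) : 1 <= s -> 2 <= t -> 1 <= l -> 1 <= q ->
  FF s t z l q (t * s+l) (t * s+l) = (q + 2) * t * s + (t * s + l) * (t - 1) + 2 * z - 1.
Proof. rewrite /FF => *; lia. Qed.

Lemma case5 (s t z l q m2 : int) : 1 <= s -> 2 <= t -> 1 <= l -> l < z -> z <= t * s -> t * s < l+s-1 ->
  1 <= q -> q * l <= z - 1 -> m2 = Num.min (l + Num.max (z-1) (z-q * l+s-1)) (t * s+l) ->
  FF s t z l q (t * s+l) m2 <= 3 * t * s + (t * s + l) * (t - 1) + 2 * z - 1 /\
  FZ s t z <= FF s t z l q (t * s+l) m2.
Proof.
rewrite /FF /FZ => s1 t2 l1 lz zts htl q1 hql ->.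
have q1' : q = 1 by nia.
subst q.
have h : (z - l) * (t - 2) <= l - 1 by nia.
split; nia.
Qed.

Lemma case6 (s t z l q : int) :
  FF s t z l q (l + z - 1) (l + z - 1) = 2 * t * s + (t * s + l) * (t - 1) + (q + 2) * z - q - 1.
Proof. rewrite /FF; lia. Qed.

Lemma case8 (s t z l q : int) :
  FF s t z l q (2 * l + s - 1) (l + z - 1) = 2 * t * s + (t * s + l) * (t - 1) + 3 * z + (l + s - 1) * q - l - s - 1.
Proof. rewrite /FF; lia. Qed.

Lemma case7 (s t z l q m : int) : 1 <= s -> 2 <= t -> 1 <= l -> l + s - 1 < z -> z <= t * s ->
  1 <= q -> q <= t - 1 -> q * l <= z - 1 -> q * l < s -> (q = t - 1 \/ z <= q * l + l) ->
  m = Num.min (l + z - q * l + s - 1) (t * s + l) ->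
  ((t * s + l) * (t + 1) + q * (z - 1) - 2 * l + z + t * s + Num.min 0 (z + s * (1 - t) - l * q - 1)) <= FF s t z l q m m /\ FZ s t z <= ((t * s + l) * (t + 1) + q * (z - 1) - 2 * l + z + t * s + Num.min 0 (z + s * (1 - t) - l * q - 1)).
Proof.
rewrite /FF /FZ => s1 t2 l1 hz zts q1 qt hql hqs hq ->.
have qt1 : q = t - 1.
  case: hq => // hq; have : q * l <= s - 1 by lia. lia.
subst q.
case: (boolP (l + z - (t - 1) * l + s - 1 <= t * s + l)) => hm.
- have -> : Num.min (l + z - (t - 1) * l + s - 1) (t * s + l) = l + z - (t - 1) * l + s - 1 by lia.
  have -> : Num.min 0 (z + s * (1 - t) - l * (t - 1) - 1) = z + s * (1 - t) - l * (t - 1) - 1 by nia.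
  have h1 : 0 <= (t - 1 - 1) * (s - (t - 1) * l) by nia.
  have h2 : t - 1 <= (t - 1) * l by nia.
  split; nia.
- have -> : Num.min (l + z - (t - 1) * l + s - 1) (t * s + l) = t * s + l by lia.
  have -> : Num.min 0 (z + s * (1 - t) - l * (t - 1) - 1) = 0 by nia.
  have h1 : 0 <= (t - 1 - 1) * (t * s - z + 1) by nia.
  have h2 : t - 1 <= (t - 1) * l by nia.
  split; nia.
Qed.

Lemma case9 (s t z l q m1 m2 : int) : 1 <= s -> 2 <= t -> 1 <= l -> l < z -> z <= l + s - 1 -> l + s - 1 <= t * s ->
  1 <= q -> q <= t - 1 -> q * l <= z - 1 -> q * l < s -> (q = t - 1 \/ z <= q * l + l) ->
  m1 = Num.min (l + Num.max (z - 1) (s - 1 + Num.max l (z - q * l))) (t * s + l) ->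
  m2 = Num.min (l + Num.max (z - 1) (z - q * l + s - 1)) (t * s + l) ->
  let G := (t * s + l) * (t + 1) + q * (s - 1) - 3 * l + 3 * z - 1 + Num.min 0 (t * s - z + 1 + l * q - s) in
  (q < t - 1 -> FF s t z l q m1 m2 = G) /\ (q = t - 1 -> G <= FF s t z l q m1 m2 /\ FZ s t z <= G).
Proof.
rewrite /FF /FZ => s1 t2 l1 lz hz hls q1 qt hql hqs hq -> ->.
split.
- move=> hqt; case: hq => hq; first lia.
  have -> : Num.min (l + Num.max (z - 1) (s - 1 + Num.max l (z - q * l))) (t * s + l) = 2 * l + s - 1 by lia.
  have -> : Num.min (l + Num.max (z - 1) (z - q * l + s - 1)) (t * s + l) = l + z - q * l + s - 1 by lia.
  have -> : Num.min 0 (t * s - z + 1 + l * q - s) = 0 by nia.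
  nia.
- move=> qt1; subst q.
  have -> : Num.max (z - 1) (s - 1 + Num.max l (z - (t - 1) * l)) = s - 1 + Num.max l (z - (t - 1) * l) by lia.
  have -> : Num.max (z - 1) (z - (t - 1) * l + s - 1) = z - (t - 1) * l + s - 1 by lia.
  have h2 : t - 1 <= (t - 1) * l by nia.
  case: (boolP (l <= z - (t - 1) * l)) => ha.
  + have -> : Num.max l (z - (t - 1) * l) = z - (t - 1) * l by lia.
    case: (boolP (z - (t - 1) * l + s - 1 <= t * s)) => hb.
    * have -> : Num.min (l + (s - 1 + (z - (t - 1) * l))) (t * s + l) = l + (s - 1 + (z - (t - 1) * l)) by lia.
      have -> : Num.min (l + (z - (t - 1) * l + s - 1)) (t * s + l) = l + (z - (t - 1) * l + s - 1) by lia.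
      have -> : Num.min 0 (t * s - z + 1 + l * (t - 1) - s) = 0 by nia.
      split; nia.
    * have -> : Num.min (l + (s - 1 + (z - (t - 1) * l))) (t * s + l) = t * s + l by lia.
      have -> : Num.min (l + (z - (t - 1) * l + s - 1)) (t * s + l) = t * s + l by lia.
      have -> : Num.min 0 (t * s - z + 1 + l * (t - 1) - s) = t * s - z + 1 + l * (t - 1) - s by nia.
      split; nia.
  + have -> : Num.max l (z - (t - 1) * l) = l by lia.
    have -> : Num.min (l + (s - 1 + l)) (t * s + l) = 2 * l + s - 1 by lia.
    have -> : Num.min (l + (z - (t - 1) * l + s - 1)) (t * s + l) = l + (z - (t - 1) * l + s - 1) by lia.
    have -> : Num.min 0 (t * s - z + 1 + l * (t - 1) - s) = 0 by nia.
    split; nia.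
Qed.

Lemma Fl_Gl s t z l : (0 < s)%N -> (1 < t)%N -> (0 < z)%N -> (0 < l)%N -> (l < z)%N ->
  (Fnat s t z l)%:Z >= Num.min (Gamma s t z l) (Gamma s t z z) /\
  Gamma s t z l >= Num.min (Fnat s t z l)%:Z (Fnat s t z z)%:Z.
Proof.
move=> s0 t1 z0 l0 lz.
have [hqt hql hqlt hl0 hq0] := @qpar_facts t z l t1 z0 (ltnW lz).
rewrite -Fz_Gz //.
have q1 : (0 < qpar t z l)%N.
  case: (posnP (qpar t z l)) => // h; move: (hq0 h); lia.
have Fz : (Fnat s t z z)%:Z = FZ s t z.
  rewrite /Fnat /FZ /Ee /Rb /theta qpar_z // eqxx; lia.
set q := qpar t z l in hqt hql hqlt q1 *.
have hq : (q = t - 1 \/ z <= q * l + l)%N.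
  case: (ltnP q (t - 1)) => h; [right; by case: (hqlt h) | left; lia].
clear hl0 hq0 hqlt.
have hF : (Fnat s t z l)%:Z = FF s t z l q (minn (Lm s t z l) (theta s t l)) (minn (Ll s t z l) (theta s t l)).
  rewrite /Fnat /FF /Ee /Rb -/q.
  have -> : (q == 0)%N = false by lia.
  rewrite /theta.
  have [q' eq'] : exists q', q = q'.+1 by exists q.-1; lia.
  rewrite eq' subSS subn0; lia.
have hM1 : (minn (Lm s t z l) (theta s t l))%:Z =
    Num.min ((l:int) + Num.max ((z:int) - 1) ((s:int) - 1 + Num.max (l:int) ((z:int) - (q:int) * l))) ((t:int) * s + l).
  rewrite /Lm /theta -/q; lia.
have hM2 : (minn (Ll s t z l) (theta s t l))%:Z =
    Num.min ((l:int) + Num.max ((z:int) - 1) ((z:int) - (q:int) * l + s - 1)) ((t:int) * s + l).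
  rewrite /Ll /theta -/q; lia.
rewrite Fz hF hM1 hM2; clear Fz hF hM1 hM2.
rewrite /Gamma -/q.
have -> : (l == 0)%N = false by lia.
have -> : (l == z) = false by apply/eqP; lia.
rewrite /=.
case: ifP => h4.
  have := @case4 s t z l q ltac:(lia) ltac:(lia) ltac:(lia) ltac:(lia).
  have -> : Num.min ((l:int) + Num.max ((z:int) - 1) ((s:int) - 1 + Num.max (l:int) ((z:int) - (q:int) * l))) ((t:int) * s + l) = (t:int) * s + l by lia.
  have -> : Num.min ((l:int) + Num.max ((z:int) - 1) ((z:int) - (q:int) * l + s - 1)) ((t:int) * s + l) = (t:int) * s + l by lia.
  rewrite /theta => ->; split; lia.
case: ifP => h5.
  have -> : Num.min ((l:int) + Num.max ((z:int) - 1) ((s:int) - 1 + Num.max (l:int) ((z:int) - (q:int) * l))) ((t:int) * s + l) = (t:int) * s + l by lia.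
  have := @case5 s t z l q _ ltac:(lia) ltac:(lia) ltac:(lia) ltac:(lia) ltac:(lia) ltac:(lia) ltac:(lia) ltac:(lia) erefl.
  rewrite /theta; split; lia.
case: ifP => h6.
  case: ifP => h6'.
    have -> : Num.min ((l:int) + Num.max ((z:int) - 1) ((s:int) - 1 + Num.max (l:int) ((z:int) - (q:int) * l))) ((t:int) * s + l) = (l:int) + z - 1 by lia.
    have -> : Num.min ((l:int) + Num.max ((z:int) - 1) ((z:int) - (q:int) * l + s - 1)) ((t:int) * s + l) = (l:int) + z - 1 by lia.
    have := @case6 s t z l q.
    rewrite /theta => ->; split; lia.
  have e1 : Num.min ((l:int) + Num.max ((z:int) - 1) ((s:int) - 1 + Num.max (l:int) ((z:int) - (q:int) * l))) ((t:int) * s + l) = Num.min ((l:int) + z - (q:int) * l + s - 1) ((t:int) * s + l) by lia.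
  have e2 : Num.min ((l:int) + Num.max ((z:int) - 1) ((z:int) - (q:int) * l + s - 1)) ((t:int) * s + l) = Num.min ((l:int) + z - (q:int) * l + s - 1) ((t:int) * s + l) by lia.
  rewrite e1 e2; clear e1 e2.
  have := @case7 s t z l q _ ltac:(lia) ltac:(lia) ltac:(lia) ltac:(lia) ltac:(lia) ltac:(lia) ltac:(lia) ltac:(lia) ltac:(lia) ltac:(lia) erefl.
  rewrite /theta; split; lia.
case: ifP => h8.
  have -> : Num.min ((l:int) + Num.max ((z:int) - 1) ((s:int) - 1 + Num.max (l:int) ((z:int) - (q:int) * l))) ((t:int) * s + l) = 2 * (l:int) + s - 1 by lia.
  have -> : Num.min ((l:int) + Num.max ((z:int) - 1) ((z:int) - (q:int) * l + s - 1)) ((t:int) * s + l) = (l:int) + z - 1 by lia.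
  have := @case8 s t z l q.
  rewrite /theta => ->; split; lia.
have := @case9 s t z l q _ _ ltac:(lia) ltac:(lia) ltac:(lia) ltac:(lia) ltac:(lia) ltac:(lia) ltac:(lia) ltac:(lia) ltac:(lia) ltac:(lia) ltac:(lia) erefl erefl.
rewrite /theta => -[c1 c2].
case: (ltnP q (t - 1)) => hqq.
  have := c1 ltac:(lia); split; lia.
have := c2 ltac:(lia); split; lia.
Qed.

Lemma bigminn_gen n : forall (x0 : nat) (F : nat -> nat),
  (forall i, (i < n)%N -> (\big[minn/x0]_(j < n) F j <= F i)%N) /\
  (\big[minn/x0]_(j < n) F j = x0 \/ exists2 i, (i < n)%N & \big[minn/x0]_(j < n) F j = F i).
Proof.
elim: n => [|n IH] x0 F; first by rewrite big_ord0; split => //; left.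
rewrite big_ord_recl /=.
have e : \big[minn/x0]_(i < n) F (lift ord0 i) = \big[minn/x0]_(i < n) (fun k => F k.+1) i.
  by apply: eq_bigr => i _; rewrite lift0.
rewrite e.
have [IH1 IH2] := IH x0 (fun k => F k.+1).
set m := \big[minn/x0]_(i < n) (fun k => F k.+1) i in IH1 IH2 *.
split.
  move=> [|i] hi; first lia.
  have := IH1 i hi; lia.
case: IH2 => [hm | [i hi hm]].
  case: (leqP (F 0%N) m) => h; [right; exists 0%N => //; lia | left; lia].
case: (leqP (F 0%N) m) => h; [right; exists 0%N => //; lia | right; exists i.+1 => //; lia].
Qed.

Lemma bigminz_gen n : forall (x0 : int) (F : nat -> int),
  (forall i, (i < n)%N -> \big[Num.min/x0]_(j < n) F j <= F i) /\
  (\big[Num.min/x0]_(j < n) F j = x0 \/ exists2 i, (i < n)%N & \big[Num.min/x0]_(j < n) F j = F i).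
Proof.
elim: n => [|n IH] x0 F; first by rewrite big_ord0; split => //; left.
rewrite big_ord_recl /=.
have e : \big[Num.min/x0]_(i < n) F (lift ord0 i) = \big[Num.min/x0]_(i < n) (fun k => F k.+1) i.
  by apply: eq_bigr => i _; rewrite lift0.
rewrite e.
have [IH1 IH2] := IH x0 (fun k => F k.+1).
set m := \big[Num.min/x0]_(i < n) (fun k => F k.+1) i in IH1 IH2 *.
split.
  move=> [|i] hi; first lia.
  have := IH1 i hi; lia.
case: IH2 => [hm | [i hi hm]].
  case: (lerP (F 0%N) m) => h; [right; exists 0%N => //; lia | left; lia].
case: (lerP (F 0%N) m) => h; [right; exists 0%N => //; lia | right; exists i.+1 => //; lia].
Qed.

Lemma bigminn_prop (F : nat -> nat) n :
  (forall i, (i <= n)%N -> (\big[minn/F 0%N]_(j < n.+1) F j <= F i)%N) /\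
  (exists2 i, (i <= n)%N & \big[minn/F 0%N]_(j < n.+1) F j = F i).
Proof.
have [h1 h2] := bigminn_gen n.+1 (F 0%N) F.
split; first by move=> i hi; apply: h1.
by case: h2 => [->|[i hi ->]]; [exists 0%N | exists i].
Qed.

Lemma bigminz_prop (F : nat -> int) n :
  (forall i, (i <= n)%N -> \big[Num.min/F 0%N]_(j < n.+1) F j <= F i) /\
  (exists2 i, (i <= n)%N & \big[Num.min/F 0%N]_(j < n.+1) F j = F i).
Proof.
have [h1 h2] := bigminz_gen n.+1 (F 0%N) F.
split; first by move=> i hi; apply: h1.
by case: h2 => [->|[i hi ->]]; [exists 0%N | exists i].
Qed.

Lemma min_transfer (f : nat -> nat) (g : nat -> int) n :
  (forall l, (l <= n)%N -> Num.min (g l) (g n) <= (f l)%:Z /\ Num.min (f l)%:Z (f n)%:Z <= g l) ->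
  (f n)%:Z = g n ->
  (\big[minn/f 0%N]_(l < n.+1) f l)%:Z = \big[Num.min/g 0%N]_(l < n.+1) g l.
Proof.
move=> H Hn.
have [F1 [a ha Fa]] := bigminn_prop f n.
have [G1 [b hb Gb]] := bigminz_prop g n.
set mf := \big[minn/f 0%N]_(l < n.+1) f l in F1 Fa *.
set mg := \big[Num.min/g 0%N]_(l < n.+1) g l in G1 Gb *.
have [Ha1 Ha2] := H a ha.
have [Hb1 Hb2] := H b hb.
have := F1 a ha; have := F1 b hb; have := F1 n (leqnn n).
have := G1 a ha; have := G1 b hb; have := G1 n (leqnn n).
lia.
Qed.

Lemma all_l s t z : (0 < s)%N -> (1 < t)%N -> (0 < z)%N -> forall l, (l <= z)%N ->
  Num.min (Gamma s t z l) (Gamma s t z z) <= (Nworkers s t z l)%:Z /\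
  Num.min (Nworkers s t z l)%:Z (Nworkers s t z z)%:Z <= Gamma s t z l.
Proof.
move=> s0 t1 z0 l hl.
rewrite !Nworkers_F //.
case: (posnP l) => l0.
  subst l; exact: F0_G0.
case: (ltnP l z) => lz.
  exact: Fl_Gl.
have -> : l = z by lia.
rewrite Fz_Gz //; split; lia.
Qed.

Theorem theorem5 (s t z : nat) :
  (0 < s)%N -> (0 < t)%N -> (0 < z)%N ->
  (N_AGE s t z)%:Z =
    if t == 1%N then (2 * s + 2 * z - 1)%N%:Z
    else \big[Num.min/Gamma s t z 0]_(l < z.+1) Gamma s t z l.
Proof.
move=> s0 t0 z0; rewrite /N_AGE.
case: eqP => [t1|t1].
  subst t.
  have [F1 [a ha Fa]] := bigminn_prop (Nworkers s 1 z) z.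
  by rewrite Fa Nworkers_t1.
have t2 : (1 < t)%N by lia.
apply: min_transfer.
  exact: all_l.
by rewrite Nworkers_F // Fz_Gz.
Qed.
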